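(* Let $\Omega\subset\mathbb{R}^d$ be a compact set, $\mu$ a positive finite measure on $\Omega$ with $\mu(\Omega)>0$, and $n\ge 0$ an integer. Let $S(f)=\sum_{i=1}^M w_i f(\mathbf{x}_i)$ be a cubature rule with nodes $\mathbf{x}_i\in\Omega$ and positive weights $w_i>0$. Let $\{\phi_j\}_{j=1}^{d_n}$ be a $\mu$-orthonormal basis of $\mathbb{P}_n$ (polynomials of total degree at most $n$, $d_n=\dim\mathbb{P}_n$), and let $G=(S(\phi_i\phi_j))_{1\le i,j\le d_n}$. Suppose there are constants $A>0$, $B>0$ such that $$A\,\|p\|_{L^2}^2\le S(p^2)\le B\,\|p\|_{L^2}^2\quad\text{for all }p\in\mathbb{P}_n,$$ where $\|p\|_{L^2}^2=\int_\Omega p^2\,d\mu$, and that $\eta:=\max\{|A-1|,|B-1|\}<1$. For $f\in C(\Omega)$ define the weighted least-squares polynomial $$\mathcal{G}_nf=\sum_{j=1}^{d_n}c_j\phi_j,\qquad (c_1,\dots,c_{d_n})^T=G^{-1}\bigl(S(f\phi_1),\dots,S(f\phi_{d_n})\bigr)^T.$$ Then for every $f\in C(\Omega)$, $$\|f-\mathcal{G}_nf\|_{L^2}\le\Bigl(1+\sqrt{\mathrm{cond}_2(G)}\Bigr)\sqrt{\mu(\Omega)}\,E_n(f)\le\Bigl(1+\sqrt{\tfrac{1+\eta}{1-\eta}}\Bigr)\sqrt{\mu(\Omega)}\,E_n(f),$$ and, if in addition the rule is exact on constants (i.e. $\sum_{i=1}^M w_i=\mu(\Omega)$), $$\|f-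\mathcal{G}_nf\|_{L^2}\le\Bigl(1+\tfrac{1}{\sqrt{A}}\Bigr)\sqrt{\mu(\Omega)}\,E_n(f)\le\Bigl(1+\tfrac{1}{\sqrt{1-\eta}}\Bigr)\sqrt{\mu(\Omega)}\,E_n(f).$$
   Context: $E_n(f)=\min_{p\in\mathbb{P}_n}\|f-p\|_{\infty}$ is the error of best uniform polynomial approximation of degree $n$ on $\Omega$. $\mathrm{cond}_2(G)=\lambda_{\max}(G)/\lambda_{\min}(G)$ is the spectral condition number of the symmetric positive definite matrix $G$. The $L^2$ norm is taken with respect to $\mu$. *)

(* Defs.v *)
From HB Require Import structures.
From mathcomp Require Import all_boot all_order all_algebra.
From mathcomp Require Import all_classical all_reals all_analysis.

Set Implicit Arguments.
Unset Strict Implicit.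
Unset Printing Implicit Defensive.

Import Order.TTheory GRing.Theory Num.Theory.
Import numFieldNormedType.Exports.
Local Open Scope classical_set_scope.
Local Open Scope ring_scope.

Definition Rd (R : realType) (d : nat) := g_sigma_algebraType (@open 'rV[R]_d).

(* P_n : real polynomial functions on R^d of total degree at most n,
   i.e. linear combinations of monomials x^a with |a| = sum_i a_i <= n. *)
Definition polys (R : realType) (d n : nat) : set ('rV[R]_d -> R) :=
  [set p | exists c : {ffun 'I_d -> 'I_n.+1} -> R,
     p = fun x : 'rV[R]_d => \sum_(a : {ffun 'I_d -> 'I_n.+1} | (\sum_(i < d) (a i : nat) <= n)%N)
                    c a * \prod_(i < d) x ord0 i ^+ a i].

Definition L2norm (R : realType) (d : nat) (mu : {measure set (Rd R d) -> \bar R})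
  (Om : set 'rV[R]_d) (g : 'rV[R]_d -> R) : R :=
  Num.sqrt (Rintegral mu Om (fun x => g x ^+ 2)).

Definition cubature (R : realType) (d M : nat) (w : 'I_M -> R) (xs : 'I_M -> 'rV[R]_d)
  (g : 'rV[R]_d -> R) : R := \sum_(i < M) w i * g (xs i).

Definition gram (R : realType) (d M k : nat) (w : 'I_M -> R) (xs : 'I_M -> 'rV[R]_d)
  (phi : 'I_k -> 'rV[R]_d -> R) : 'M[R]_k :=
  \matrix_(i, j) cubature w xs (fun y => phi i y * phi j y).

Definition wls (R : realType) (d M k : nat) (w : 'I_M -> R) (xs : 'I_M -> 'rV[R]_d)
  (phi : 'I_k -> 'rV[R]_d -> R) (f : 'rV[R]_d -> R) : 'rV[R]_d -> R :=
  let c := invmx (gram w xs phi) *m \col_(j < k) cubature w xs (fun y => f y * phi j y) in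
  fun y => \sum_(j < k) c j ord0 * phi j y.

Definition lambda_max (R : realType) (k : nat) (G : 'M[R]_k) : R :=
  sup [set l : R | eigenvalue G l].
Definition lambda_min (R : realType) (k : nat) (G : 'M[R]_k) : R :=
  inf [set l : R | eigenvalue G l].
Definition cond2 (R : realType) (k : nat) (G : 'M[R]_k) : R :=
  lambda_max G / lambda_min G.

Definition best_approx_err (R : realType) (d n : nat) (Om : set 'rV[R]_d)
  (f : 'rV[R]_d -> R) : R :=
  inf [set sup [set `|f x - p x| | x in Om] | p in @polys R d n].

(* Main.v *)
Require Import Defs.
From HB Require Import structures.
From mathcomp Require Import all_boot all_order all_algebra.
From mathcomp Require Import all_classical all_reals all_analysis.
Import Order.TTheory GRing.Theory Num.Theory.
Import numFieldNormedType.Exports.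
Local Open Scope classical_set_scope.
Local Open Scope ring_scope.

From mathcomp Require Import ring lra.
Set Implicit Arguments.
Unset Strict Implicit.
Unset Printing Implicit Defensive.

Section S.
Variables (R : realType) (d : nat).

Lemma Om_meas (Om : set 'rV[R]_d) : compact Om -> measurable (Om : set (Rd R d)).
Proof.
move=> cO.
have cl : closed Om by apply: compact_closed => //; exact: norm_hausdorff.
rewrite -(setCK Om); apply: measurableC.
apply: sub_sigma_algebra; exact: closed_openC.
Qed.

Lemma within_meas (Om : set 'rV[R]_d) (g : 'rV[R]_d -> R) :
  measurable (Om : set (Rd R d)) -> {within Om, continuous g} ->
  measurable_fun (Om : set (Rd R d)) g.
Proof.
move=> mO /continuousP cg.
apply: (measurability _ (measurable_realfun.RGenOpens.measurableE R)).
move=> _ [_ [a [b ->] <-]].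
have := cg `]a, b[%classic (@interval_open R (BRight a) (BLeft b) isT isT).
move/open_subspaceP => [V oV VE].
rewrite setIC -VE. apply: measurableI => //.
exact: sub_sigma_algebra.
Qed.
End S.
Section Good.
Variables (R : realType) (d : nat) (Om : set 'rV[R]_d).
Definition good (g : 'rV[R]_d -> R) :=
  measurable_fun (Om : set (Rd R d)) g /\ exists M, forall x, Om x -> `|g x| <= M.

Lemma good_cst c : good (fun=> c).
Proof. split; first exact: measurable_cst. by exists `|c|. Qed.

Lemma good_add f g : good f -> good g -> good (fun x => f x + g x).
Proof.
move=> [mf [M1 h1]] [mg [M2 h2]]; split; first exact: measurable_realfun.measurable_funD.
exists (M1 + M2) => x Ox; apply: (le_trans (ler_normD _ _)); exact: lerD (h1 _ Ox) (h2 _ Ox).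
Qed.

Lemma good_mul f g : good f -> good g -> good (fun x => f x * g x).
Proof.
move=> [mf [M1 h1]] [mg [M2 h2]]; split; first exact: measurable_realfun.measurable_funM.
exists (M1 * M2) => x Ox; rewrite normrM; apply: ler_pM => //; [exact: h1|exact: h2].
Qed.

Lemma good_sum (I : finType) (P : pred I) (F : I -> 'rV[R]_d -> R) :
  (forall i, good (F i)) -> good (fun x => \sum_(i | P i) F i x).
Proof.
move=> hF.
have -> : (fun x => \sum_(i | P i) F i x) = \sum_(i | P i) F i.
  by apply/funext => x; rewrite fct_sumE.
apply: (big_ind good); [exact: good_cst 0|exact: good_add|by []].
Qed.

Lemma good_within g : compact Om -> {within Om, continuous g} -> good g.
Proof.
move=> cO cg; split; first by apply: within_meas => //; exact: Om_meas.
have := compact_bounded (continuous_compact cg cO).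
move=> [M [_ HM]]; exists (M + 1) => x Ox.
have := HM (M + 1); rewrite ltrDl ltr01 => /(_ isT (g x)) /=; apply; by exists x.
Qed.

Lemma good_int (mu : {measure set (Rd R d) -> \bar R}) g :
  compact Om -> (mu Om < +oo)%E -> good g -> mu.-integrable Om (EFin \o g).
Proof.
move=> cO fin [mg [M hM]]; apply: measurable_bounded_integrable => //.
  exact: Om_meas.
apply: filterS (nbhs_pinfty_ge (num_real M)) => M' MM' x Ox.
exact: le_trans (hM _ Ox) MM'.
Qed.
End Good.

Section LA.
Variables (R : realType) (k : nat).
Implicit Types (H : 'M[R]_k) (u v : 'rV[R]_k).

Definition bil H u v : R := (u *m H *m v^T) 0 0.
Definition qf H v := bil H v v.
Definition nrm v : R := \sum_i v 0 i ^+ 2.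

Lemma bilC H u v : H^T = H -> bil H u v = bil H v u.
Proof.
move=> sH; rewrite /bil.
have E : (u *m H *m v^T) 0 0 = ((u *m H *m v^T)^T) 0 0 by rewrite [RHS]mxE.
rewrite E.
by rewrite !trmx_mul trmxK sH mulmxA.
Qed.

Lemma bilDl H u1 u2 v : bil H (u1 + u2) v = bil H u1 v + bil H u2 v.
Proof. by rewrite /bil !mulmxDl mxE. Qed.
Lemma bilDr H u v1 v2 : bil H u (v1 + v2) = bil H u v1 + bil H u v2.
Proof. by rewrite /bil linearD /= mulmxDr mxE. Qed.
Lemma bilZl H a u v : bil H (a *: u) v = a * bil H u v.
Proof. by rewrite /bil -!scalemxAl mxE. Qed.
Lemma bilZr H a u v : bil H u (a *: v) = a * bil H u v.
Proof. by rewrite /bil linearZ /= -scalemxAr mxE. Qed.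

Lemma quad_disc (a b c : R) : 0 <= c ->
  (forall t, 0 <= a + 2 * t * b + t ^+ 2 * c) -> b ^+ 2 <= a * c.
Proof.
move=> c0 h; have [cz|cp] := eqVneq c 0.
  rewrite cz mulr0; have [bz|bn] := eqVneq b 0; first by rewrite bz expr0n.
  have := h (- (a + 1) / (2 * b)); rewrite cz mulr0 addr0.
  have -> : 2 * (- (a + 1) / (2 * b)) * b = - (a + 1).
    by field; rewrite bn.
  lra.
have cg : 0 < c by rewrite lt_def cp.
have := h (- b / c).
have -> : a + 2 * (- b / c) * b + (- b / c) ^+ 2 * c = a - b ^+ 2 / c.
  by field.
rewrite subr_ge0 ler_pdivrMr //.
Qed.

Lemma cauchy_schwarz H u v : H^T = H -> (forall x, 0 <= qf H x) ->
  bil H u v ^+ 2 <= qf H u * qf H v.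
Proof.
move=> sH psd; apply: quad_disc; first exact: psd.
move=> t; have := psd (u + t *: v).
rewrite /qf bilDl !bilDr !bilZl !bilZr (@bilC H v u) //.
suff -> : bil H u u + t * bil H u v + (t * bil H u v + t * (t * bil H v v)) =
  bil H u u + 2 * t * bil H u v + t ^+ 2 * bil H v v by [].
by rewrite -!mulrA; ring.
Qed.

End LA.

Section LA2.
Variables (R : realType) (k : nat).
Implicit Types (H : 'M[R]_k) (u v : 'rV[R]_k).

Lemma bil_delta H v j : bil H v (delta_mx 0 j) = (v *m H) 0 j.
Proof. by rewrite /bil trmx_delta -colE mxE. Qed.

Lemma qf_delta H j : qf H (delta_mx 0 j) = H j j.
Proof. by rewrite /qf bil_delta -rowE mxE. Qed.

Lemma nrm_ge0 v : 0 <= nrm v.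
Proof. by apply: sumr_ge0 => i _; exact: sqr_ge0. Qed.

Lemma nrm_gt0 v : v != 0 -> 0 < nrm v.
Proof.
move=> /rV0Pn [i vi]; rewrite lt_def nrm_ge0 andbT psumr_eq0; last first.
  by move=> j _; exact: sqr_ge0.
apply/allPn; exists i; first by rewrite mem_index_enum.
by rewrite /= sqrf_eq0.
Qed.

Lemma psd_sing H : H^T = H -> (forall x, 0 <= qf H x) ->
  (forall e, 0 < e -> exists2 v : 'rV[R]_k, v != 0 & qf H v < e * nrm v) ->
  exists2 v : 'rV[R]_k, v != 0 & v *m H = 0.
Proof.
move=> sH psd small.
case: (pselect (exists2 v : 'rV[R]_k, v != 0 & v *m H = 0)) => // Hn; exfalso.
have inj : forall v, v *m H = 0 -> v = 0.
  move=> v vH; apply/eqP; apply/negPn/negP => vn; apply: Hn; by exists v.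
have uH : H \in unitmx by rewrite -row_free_unit; exact: inj_row_free.
pose Hi := invmx H.
pose K i := \sum_j Num.sqrt (H j j) * `|Hi j i|.
pose Kt := \sum_i K i ^+ 2.
have Kt0 : 0 <= Kt by apply: sumr_ge0 => i _; exact: sqr_ge0.
have K0 : forall i, 0 <= K i.
  by move=> i; apply: sumr_ge0 => j _; apply: mulr_ge0.
have bnd : forall v, nrm v <= Kt * qf H v.
  move=> v.
  have yj : forall j, `|(v *m H) 0 j| <= Num.sqrt (H j j) * Num.sqrt (qf H v).
    move=> j; have Hj0 : 0 <= H j j by rewrite -qf_delta.
    rewrite -sqrtrM // -sqrtr_sqr ler_sqrt; last by apply: mulr_ge0.
    rewrite -bil_delta -qf_delta mulrC.
    exact: cauchy_schwarz.
  have vi : forall i, `|v 0 i| <= K i * Num.sqrt (qf H v).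
    move=> i.
    have vE : v 0 i = \sum_j (v *m H) 0 j * Hi j i.
      by rewrite -[in LHS](mulmxK uH v) mxE.
    rewrite vE /K mulr_suml; apply: le_trans (ler_norm_sum _ _ _) _.
    apply: ler_sum => j _; rewrite normrM mulrAC.
    apply: ler_wpM2r => //.
  rewrite /nrm /Kt mulr_suml; apply: ler_sum => i _.
  rewrite -(real_normK (num_real (v 0 i))).
  have -> : qf H v = Num.sqrt (qf H v) ^+ 2 by rewrite sqr_sqrtr.
  rewrite -exprMn expr2 expr2.
  by apply: ler_pM => //; exact: vi.
have eg : 0 < (Kt + 1)^-1 by rewrite invr_gt0; lra.
have [v vn hv] := small _ eg.
have np := nrm_gt0 vn.
move: (bnd v) => hb0.
have e1 : (Kt + 1)^-1 * (Kt + 1) = 1 :> R.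
  by rewrite mulVf //; apply: lt0r_neq0; rewrite ltr_pwDr.

move: hv e1 eg hb0; set e := (Kt + 1)^-1; set q := qf H v; set N := nrm v.
move=> hv e1 eg hb.
have : N <= Kt * (e * N) by apply: le_trans hb _; apply: ler_wpM2l => //; exact: ltW.
have -> : Kt * (e * N) = N - e * N.
  have -> : Kt * (e * N) = (e * (Kt + 1)) * N - e * N by ring.
  by rewrite e1 mul1r.
have : 0 < e * N by apply: mulr_gt0.
lra.
Qed.
End LA2.

Section Eig.
Variables (R : realType) (k : nat).
Implicit Types (H G : 'M[R]_k) (u v : 'rV[R]_k).

Lemma vvT v : (v *m v^T) 0 0 = nrm v.
Proof. by rewrite mxE /nrm; apply: eq_bigr => i _; rewrite mxE expr2. Qed.

Lemma qf_scalar a v : qf (a%:M) v = a * nrm v.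
Proof. by rewrite /qf /bil mul_mx_scalar -scalemxAl mxE vvT. Qed.

Lemma qfB G H v : qf (G - H) v = qf G v - qf H v.
Proof. by rewrite /qf /bil mulmxBr mulmxBl [LHS]mxE [X in _ + X]mxE. Qed.

Lemma qf_eig G l v : v *m G = l *: v -> qf G v = l * nrm v.
Proof. by move=> e; rewrite /qf /bil e -scalemxAl mxE vvT. Qed.
End Eig.

Section Ray.
Variables (R : realType) (k : nat) (G : 'M[R]_k) (A B : R).
Hypotheses (k0 : (0 < k)%N) (sG : G^T = G) (A0 : 0 < A)
  (hA : forall v, A * nrm v <= qf G v) (hB : forall v, qf G v <= B * nrm v).

Definition ray := [set qf G v / nrm v | v in [set v : 'rV[R]_k | v != 0]].

Lemma qf0 H : qf H (0 : 'rV[R]_k) = 0.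
Proof. by rewrite /qf /bil !mul0mx mxE. Qed.

Lemma ray_ne : ray !=set0.
Proof.
exists (qf G (delta_mx 0 (Ordinal k0)) / nrm (delta_mx 0 (Ordinal k0))).
exists (delta_mx 0 (Ordinal k0)) => //=.
by apply/rV0Pn; exists (Ordinal k0); rewrite mxE !eqxx oner_neq0.
Qed.

Lemma ray_lb : lbound ray A.
Proof.
move=> _ [v /= vn <-]; have np := nrm_gt0 vn.
by rewrite ler_pdivlMr.
Qed.

Lemma ray_ub : ubound ray B.
Proof.
move=> _ [v /= vn <-]; have np := nrm_gt0 vn.
by rewrite ler_pdivrMr.
Qed.

Definition rmin := inf ray.
Definition rmax := sup ray.

Lemma rmin_le v : rmin * nrm v <= qf G v.
Proof.
have [->|vn] := eqVneq v 0; first by rewrite qf0 /nrm big1 ?mulr0 // => i _; rewrite mxE expr0n.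
have np := nrm_gt0 vn.
rewrite -ler_pdivlMr //; apply: ge_inf; first by exists A; exact: ray_lb.
by exists v.
Qed.

Lemma rmax_ge v : qf G v <= rmax * nrm v.
Proof.
have [->|vn] := eqVneq v 0; first by rewrite qf0 /nrm big1 ?mulr0 // => i _; rewrite mxE expr0n.
have np := nrm_gt0 vn.
rewrite -ler_pdivrMr //; apply: ub_le_sup; first by exists B; exact: ray_ub.
by exists v.
Qed.

Lemma eig_min : eigenvalue G rmin.
Proof.
have [v vn vH] : exists2 v : 'rV[R]_k, v != 0 & v *m (G - rmin%:M) = 0.
  apply: psd_sing.
  - by rewrite linearB /= tr_scalar_mx sG.
  - by move=> x; rewrite qfB qf_scalar subr_ge0 rmin_le.
  - move=> e e0.
    have [_ [v /= vn <-] hv] := inf_adherent e0 (conj ray_ne (ex_intro _ A ray_lb)).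
    exists v => //; have np := nrm_gt0 vn.
    move: hv; rewrite ltr_pdivrMr // mulrDl => hv; rewrite qfB qf_scalar /rmin; lra.
apply/eigenvalueP; exists v => //.
by move: vH; rewrite mulmxBr mul_mx_scalar => /eqP; rewrite subr_eq0 => /eqP.
Qed.

Lemma eig_max : eigenvalue G rmax.
Proof.
have [v vn vH] : exists2 v : 'rV[R]_k, v != 0 & v *m (rmax%:M - G) = 0.
  apply: psd_sing.
  - by rewrite linearB /= tr_scalar_mx sG.
  - by move=> x; rewrite qfB qf_scalar subr_ge0 rmax_ge.
  - move=> e e0.
    have [_ [v /= vn <-] hv] := sup_adherent e0 (conj ray_ne (ex_intro _ B ray_ub)).
    exists v => //; have np := nrm_gt0 vn.
    move: hv; rewrite ltr_pdivlMr // mulrBl => hv.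
    rewrite qfB qf_scalar /rmax; lra.
apply/eigenvalueP; exists v => //.
by move: vH; rewrite mulmxBr mul_mx_scalar => /eqP; rewrite subr_eq0 => /eqP <-.
Qed.

Lemma eig_bnd l : eigenvalue G l -> rmin <= l /\ l <= rmax.
Proof.
move=> /eigenvalueP [v vG vn]; have np := nrm_gt0 vn.
have e := qf_eig vG; split.
  by rewrite -(ler_pM2r np) -e rmin_le.
by rewrite -(ler_pM2r np) -e rmax_ge.
Qed.

Lemma lmin_eq : lambda_min G = rmin.
Proof.
apply/eqP; rewrite eq_le; apply/andP; split.
  apply: ge_inf; last exact: eig_min.
  by exists rmin => l /eig_bnd [].
apply: lb_le_inf; first by exists rmin; exact: eig_min.
by move=> l /eig_bnd [].
Qed.

Lemma lmax_eq : lambda_max G = rmax.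
Proof.
apply/eqP; rewrite eq_le; apply/andP; split.
  apply: ge_sup; first by exists rmax; exact: eig_max.
  by move=> l /eig_bnd [].
apply: ub_le_sup; last exact: eig_max.
by exists rmax => l /eig_bnd [].
Qed.

Lemma A_le_rmin : A <= rmin.
Proof. by apply: lb_le_inf; [exact: ray_ne|exact: ray_lb]. Qed.
Lemma rmax_le_B : rmax <= B.
Proof. by apply: ge_sup; [exact: ray_ne|exact: ray_ub]. Qed.
End Ray.

Section Polys.
Variables (R : realType) (d n : nat).

Lemma polys_add p q : polys n p -> polys n q -> @polys R d n (fun x => p x + q x).
Proof.
move=> [c1 ->] [c2 ->]; exists (fun a => c1 a + c2 a); apply/funext => x.
by rewrite -big_split; apply: eq_bigr => a _; rewrite mulrDl.
Qed.

Lemma polys_scale a p : polys n p -> @polys R d n (fun x => a * p x).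
Proof.
move=> [c ->]; exists (fun b => a * c b); apply/funext => x.
by rewrite mulr_sumr; apply: eq_bigr => b _; rewrite mulrA.
Qed.

Lemma polys0 : @polys R d n (fun=> 0).
Proof. by exists (fun=> 0); apply/funext => x; rewrite big1 // => a _; rewrite mul0r. Qed.

Lemma polys1 : @polys R d n (fun=> 1).
Proof.
exists (fun a => (a == [ffun=> ord0])%:R); apply/funext => x.
rewrite (bigD1 [ffun=> ord0]) /=; last first.
  by rewrite big1 // => i _; rewrite ffunE.
rewrite eqxx mul1r [X in _ + X]big1 ?addr0; last first.
  by move=> a /andP[_ ne]; rewrite (negbTE ne) mul0r.
by rewrite big1 // => i _; rewrite ffunE expr0.
Qed.

Lemma polys_comb (k : nat) (phi : 'I_k -> 'rV[R]_d -> R) (c : 'I_k -> R) :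
  (forall j, polys n (phi j)) -> polys n (fun x => \sum_(j < k) c j * phi j x).
Proof.
move=> hp.
have -> : (fun x => \sum_(j < k) c j * phi j x) = \sum_(j < k) (fun x => c j * phi j x).
  by rewrite fct_sumE.
apply: (big_ind (polys n)); [exact: polys0|exact: polys_add|].
by move=> j _; apply: polys_scale.
Qed.
End Polys.

Section GoodPoly.
Variables (R : realType) (d n : nat) (Om : set 'rV[R]_d).
Hypothesis cO : compact Om.

Lemma good_prod (I : finType) (P : pred I) (F : I -> 'rV[R]_d -> R) :
  (forall i, good Om (F i)) -> good Om (fun x => \prod_(i | P i) F i x).
Proof.
move=> hF.
have -> : (fun x => \prod_(i | P i) F i x) = \prod_(i | P i) F i.
  by rewrite fct_prodE.
apply: (big_ind (good Om)); [exact: good_cst 1|exact: good_mul|by []].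
Qed.

Lemma good_exp g m : good Om g -> good Om (fun x => g x ^+ m).
Proof.
move=> hg; elim: m => [|m IH]; first by under eq_fun do rewrite expr0; exact: good_cst.
under eq_fun do rewrite exprS; exact: good_mul.
Qed.

Lemma good_coord i : good Om (fun x : 'rV[R]_d => x ord0 i).
Proof. apply: good_within cO _; apply: continuous_subspaceT; exact: coord_continuous. Qed.

Lemma good_poly p : polys n p -> good Om p.
Proof.
move=> [c ->]; apply: good_sum => a; apply: good_mul; first exact: good_cst.
by apply: good_prod => i; apply: good_exp; exact: good_coord.
Qed.
End GoodPoly.

Section Main.
Variables (R : realType) (d : nat) (Om : set 'rV[R]_d)
  (mu : {measure set (Rd R d) -> \bar R}) (n M k : nat)
  (w : 'I_M -> R) (xs : 'I_M -> 'rV[R]_d) (phi : 'I_k -> 'rV[R]_d -> R) (A B : R).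
Hypotheses (cO : compact Om) (mpos : (0 < mu Om)%E) (mfin : (mu Om < +oo)%E)
  (xsO : forall i, Om (xs i)) (wpos : forall i, 0 < w i)
  (phiP : forall j, @polys R d n (phi j))
  (orth : forall i j, Rintegral mu Om (fun x => phi i x * phi j x) = (i == j)%:R)
  (span : forall p, @polys R d n p -> exists c : 'I_k -> R, p = fun x => \sum_(j < k) c j * phi j x)
  (A0 : 0 < A) (B0 : 0 < B)
  (hAB : forall p, @polys R d n p ->
     A * L2norm mu Om p ^+ 2 <= cubature w xs (fun x => p x ^+ 2) /\
     cubature w xs (fun x => p x ^+ 2) <= B * L2norm mu Om p ^+ 2).

Let mO : measurable (Om : set (Rd R d)) := Om_meas cO.

Lemma gint g : good Om g -> mu.-integrable Om (EFin \o g).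
Proof. exact: good_int. Qed.

Lemma good_sumseq (I : Type) (r : seq I) (F : I -> 'rV[R]_d -> R) :
  (forall i, good Om (F i)) -> good Om (fun x => \sum_(i <- r) F i x).
Proof.
move=> hF.
have -> : (fun x => \sum_(i <- r) F i x) = \sum_(i <- r) F i by rewrite fct_sumE.
by apply: (big_ind (good Om)); [exact: good_cst 0|exact: good_add|].
Qed.

Lemma Rint_sum (I : Type) (r : seq I) (F : I -> 'rV[R]_d -> R) :
  (forall i, good Om (F i)) ->
  Rintegral mu Om (fun x => \sum_(i <- r) F i x) = \sum_(i <- r) Rintegral mu Om (F i).
Proof.
move=> hF; elim: r => [|a r IH].
  rewrite (_ : (fun x => \sum_(i <- [::]) F i x) = fun=> 0); last first.
    by apply/funext => x; rewrite big_nil.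
  by rewrite big_nil Rintegral_cst // mul0r.
rewrite (_ : (fun x => \sum_(i <- a :: r) F i x) = fun x => F a x + \sum_(i <- r) F i x); last first.
  by apply/funext => x; rewrite big_cons.
rewrite RintegralD //; first by rewrite IH big_cons.
- exact: gint.
- by apply: gint; apply: good_sumseq.
Qed.

Lemma RintZ a g : good Om g ->
  Rintegral mu Om (fun x => a * g x) = a * Rintegral mu Om g.
Proof. by move=> hg; rewrite RintegralZl //; exact: gint. Qed.

Lemma cub_sum (I : Type) (r : seq I) (F : I -> 'rV[R]_d -> R) :
  cubature w xs (fun x => \sum_(i <- r) F i x) = \sum_(i <- r) cubature w xs (F i).
Proof.
rewrite /cubature; under eq_bigr do rewrite mulr_sumr.
exact: exchange_big.
Qed.

Lemma cubZ a g : cubature w xs (fun x => a * g x) = a * cubature w xs g.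
Proof. by rewrite /cubature mulr_sumr; apply: eq_bigr => i _; rewrite mulrCA. Qed.

Lemma cubD f g : cubature w xs (fun x => f x + g x) = cubature w xs f + cubature w xs g.
Proof. by rewrite /cubature -big_split; apply: eq_bigr => i _; rewrite mulrDr. Qed.

Definition pc (c : 'rV[R]_k) x := \sum_j c 0 j * phi j x.

Lemma good_phi j : good Om (phi j).
Proof. exact: good_poly. Qed.

Lemma pc2E c x : pc c x ^+ 2 = \sum_i \sum_j (c 0 i * c 0 j) * (phi i x * phi j x).
Proof.
rewrite /pc expr2 mulr_suml; apply: eq_bigr => i _; rewrite mulr_sumr.
by apply: eq_bigr => j _; ring.
Qed.

Lemma int_pc2 c : Rintegral mu Om (fun x => pc c x ^+ 2) = nrm c.
Proof.
under eq_fun do rewrite pc2E.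
rewrite Rint_sum; last first.
  move=> i; apply: good_sumseq => j; apply: good_mul; first exact: good_cst.
  by apply: good_mul; exact: good_phi.
rewrite /nrm; apply: eq_bigr => i _.
rewrite Rint_sum; last first.
  by move=> j; apply: good_mul; [exact: good_cst|apply: good_mul; exact: good_phi].
rewrite (bigD1 i) //= big1 ?addr0.
  by rewrite RintZ ?orth ?eqxx ?mulr1 ?expr2 //; apply: good_mul; exact: good_phi.
move=> j ji; rewrite RintZ ?orth; last by apply: good_mul; exact: good_phi.
by rewrite eq_sym (negbTE ji) mulr0.
Qed.

Lemma cub_pc2 c : cubature w xs (fun x => pc c x ^+ 2) = qf (gram w xs phi) c.
Proof.
under eq_fun do rewrite pc2E.
rewrite cub_sum /qf /bil mxE.
under [RHS]eq_bigr => j _ do rewrite !mxE mulr_suml.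
rewrite [RHS]exchange_big /=; apply: eq_bigr => i _; rewrite cub_sum.
apply: eq_bigr => j _; rewrite cubZ !mxE; ring.
Qed.

Lemma G_sym : (gram w xs phi)^T = gram w xs phi.
Proof.
apply/matrixP => i j; rewrite !mxE /cubature; apply: eq_bigr => m _.
by rewrite mulrC [phi i _ * _]mulrC mulrC.
Qed.

Lemma pc_poly c : polys n (pc c).
Proof. exact: (polys_comb (fun j => c 0 j) phiP). Qed.

Lemma L2n2 p : good Om p -> L2norm mu Om p ^+ 2 = Rintegral mu Om (fun x => p x ^+ 2).
Proof.
move=> _; rewrite /L2norm sqr_sqrtr //; apply: Rintegral_ge0 => x _; exact: sqr_ge0.
Qed.

Lemma hA' c : A * nrm c <= qf (gram w xs phi) c.
Proof.
have [h _] := hAB (pc_poly c).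
by rewrite -cub_pc2 -int_pc2 -L2n2 //; apply: good_poly (pc_poly c).
Qed.

Lemma hB' c : qf (gram w xs phi) c <= B * nrm c.
Proof.
have [_ h] := hAB (pc_poly c).
by rewrite -cub_pc2 -int_pc2 -L2n2 //; apply: good_poly (pc_poly c).
Qed.

Lemma k_gt0 : (0 < k)%N.
Proof.
have [c hc] := span (@polys1 R d n).
case: k phi c hc => [|//] ph c hc.
have := congr1 (fun f => f 0) hc => /=; rewrite big_ord0 => /eqP; by rewrite oner_eq0.
Qed.

Local Notation G := (gram w xs phi).
Definition bvec (g : 'rV[R]_d -> R) : 'cV[R]_k :=
  \col_(j < k) cubature w xs (fun y => g y * phi j y).

Lemma bvec_pc a : bvec (pc a) = G *m a^T.
Proof.
apply/matrixP => j z; rewrite !mxE.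
under eq_fun do rewrite /pc mulr_suml.
rewrite cub_sum; apply: eq_bigr => i _.
rewrite !mxE [z]ord1 mulrC -cubZ; congr cubature; apply/funext => y; ring.
Qed.

Lemma bvecD f g : bvec (fun y => f y + g y) = bvec f + bvec g.
Proof.
apply/matrixP => j z; rewrite !mxE -cubD; congr cubature; apply/funext => y.
by rewrite mulrDl.
Qed.

Lemma G_unit : G \in unitmx.
Proof.
rewrite -row_free_unit; apply: inj_row_free => v vG.
apply/eqP; apply/negPn/negP => vn.
have := hA' v; rewrite /qf /bil vG mul0mx mxE.
have := nrm_gt0 vn; have := A0; nra.
Qed.

Lemma wls_split f p : polys n p ->
  let cg := invmx G *m bvec (fun y => f y - p y) in
  wls w xs phi f = fun y => p y + pc (cg^T) y.
Proof.
move=> hp cg; have [c hc] := span hp.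
pose a := \row_j c j.
have pa : p = pc a.
  by rewrite hc /pc; apply/funext => y; apply: eq_bigr => j _; rewrite mxE.
have bf : bvec f = G *m a^T + bvec (fun y => f y - p y).
  rewrite -bvec_pc -pa -bvecD; congr bvec; apply/funext => y; ring.
rewrite /cg; move: (bvec (fun y => f y - p y)) bf => bg bf.
apply/funext => y; rewrite /wls -/(bvec f) bf mulmxDr mulKmx; last exact: G_unit.
rewrite pa /pc -big_split /=; apply: eq_bigr => j _.
by rewrite !mxE mulrDl.
Qed.

Lemma qf_cg g : let cg := invmx G *m bvec g in
  qf G cg^T = cubature w xs (fun y => g y * pc cg^T y).
Proof.
move=> cg; rewrite /qf /bil trmxK -mulmxA /cg mulKVmx; last exact: G_unit.
rewrite mxE (_ : (fun y => g y * pc (invmx G *m bvec g)^T y) =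
  fun y => \sum_j g y * ((invmx G *m bvec g)^T 0 j * phi j y)); last first.
  by apply/funext => y; rewrite /pc mulr_sumr.
rewrite cub_sum; apply: eq_bigr => j _; rewrite !mxE -cubZ.
by congr cubature; apply/funext => y; ring.
Qed.

Lemma cub_sq_ge0 g : 0 <= cubature w xs (fun y => g y ^+ 2).
Proof. by apply: sumr_ge0 => i _; apply: mulr_ge0; [exact: ltW|exact: sqr_ge0]. Qed.

Lemma cub_proj g :
  cubature w xs (fun y => pc (invmx G *m bvec g)^T y ^+ 2) <= cubature w xs (fun y => g y ^+ 2).
Proof.
set q := pc _.
have e1 : cubature w xs (fun y => g y * q y) = cubature w xs (fun y => q y ^+ 2).
  by rewrite cub_pc2 qf_cg.
have h := cub_sq_ge0 (fun y => g y - q y).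
have e2 : cubature w xs (fun y => (g y - q y) ^+ 2) =
  cubature w xs (fun y => g y ^+ 2) - 2 * cubature w xs (fun y => g y * q y)
  + cubature w xs (fun y => q y ^+ 2).
  rewrite /cubature !mulr_sumr -sumrB -big_split /=; apply: eq_bigr => i _; ring.
move: h; rewrite e2 e1; lra.
Qed.

Lemma cub_bnd g E : (forall x, Om x -> `|g x| <= E) ->
  cubature w xs (fun y => g y ^+ 2) <= (\sum_i w i) * E ^+ 2.
Proof.
move=> hg; rewrite /cubature mulr_suml; apply: ler_sum => i _.
apply: ler_wpM2l; first exact: ltW.
rewrite -(real_normK (num_real (g (xs i)))) !expr2.
have := hg _ (xsO i); have := normr_ge0 (g (xs i)); nra.
Qed.

Lemma RintB_sq g q a : good Om g -> good Om q ->
  Rintegral mu Om (fun x => (g x + a * q x) ^+ 2) =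
  Rintegral mu Om (fun x => g x ^+ 2) + 2 * a * Rintegral mu Om (fun x => g x * q x)
  + a ^+ 2 * Rintegral mu Om (fun x => q x ^+ 2).
Proof.
move=> gg gq.
have g2 : good Om (fun x => g x ^+ 2) by apply: good_exp.
have q2 : good Om (fun x => q x ^+ 2) by apply: good_exp.
have gqg : good Om (fun x => g x * q x) by apply: good_mul.
rewrite (_ : (fun x => (g x + a * q x) ^+ 2) = fun x =>
   (g x ^+ 2 + 2 * a * (g x * q x)) + a ^+ 2 * q x ^+ 2); last first.
  by apply/funext => x; ring.
rewrite RintegralD //; last first.
- by apply: gint; apply: good_mul => //; exact: good_cst.
- by apply: gint; apply: good_add => //; apply: good_mul => //; exact: good_cst.
rewrite RintegralD //; last first.
- by apply: gint; apply: good_mul => //; exact: good_cst.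
- exact: gint.
by rewrite !RintZ.
Qed.

Let m := fine (mu Om).

Lemma int_bnd g E : good Om g -> (forall x, Om x -> `|g x| <= E) ->
  Rintegral mu Om (fun x => g x ^+ 2) <= m * E ^+ 2.
Proof.
move=> gg hg.
apply: le_trans (le_Rintegral mO (gint (good_exp 2 gg)) (gint (good_cst Om (E ^+ 2))) _) _.
  move=> x Ox /=; rewrite -(real_normK (num_real (g x))) !expr2.
  have := hg _ Ox; have := normr_ge0 (g x); nra.
by rewrite Rintegral_cst // mulrC.
Qed.

Lemma sqrt_tri (X Y Z : R) : 0 <= X -> 0 <= Z -> Y ^+ 2 <= X * Z ->
  Num.sqrt (X + 2 * (-1) * Y + (-1) ^+ 2 * Z) <= Num.sqrt X + Num.sqrt Z.
Proof.
move=> X0 Z0 hY.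
have sX := sqrtr_ge0 X; have sZ := sqrtr_ge0 Z.
rewrite -[X in _ <= X]ger0_norm ?addr_ge0 // -sqrtr_sqr ler_sqrt ?sqr_ge0 //.
have eX := sqr_sqrtr X0; have eZ := sqr_sqrtr Z0.
have hs : Y ^+ 2 <= (Num.sqrt X * Num.sqrt Z) ^+ 2 by rewrite exprMn eX eZ.
have : - Y <= Num.sqrt X * Num.sqrt Z.
  have s0 : 0 <= Num.sqrt X * Num.sqrt Z by apply: mulr_ge0.
  move: hs s0; set s := _ * _; rewrite !expr2; nra.
move: eX eZ; rewrite !expr2 => eX eZ.
move=> hy; nra.
Qed.

Lemma sqrt_bnd (a N E : R) : 0 <= a -> 0 <= E -> N <= a * E ^+ 2 ->
  Num.sqrt N <= Num.sqrt a * E.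
Proof.
move=> a0 E0 h; rewrite -(ger0_norm E0) -sqrtr_sqr -sqrtrM //.
by rewrite ler_sqrt //; apply: mulr_ge0 => //; exact: sqr_ge0.
Qed.

Lemma err_gen f p E rho : good Om f -> polys n p -> 0 <= E ->
  (forall x, Om x -> `|f x - p x| <= E) -> 0 < rho ->
  (forall v, rho * nrm v <= qf G v) ->
  L2norm mu Om (fun x => f x - wls w xs phi f x) <=
    Num.sqrt m * E + Num.sqrt ((\sum_i w i) / rho) * E.
Proof.
move=> gf hp E0 hE r0 hr.
set g := fun x => f x - p x.
have gg : good Om g.
  have hm : good Om (fun x => (-1) * p x).
    by apply: good_mul; [exact: (good_cst Om (-1))|exact: (good_poly cO hp)].
  have := good_add gf hm; congr good; apply/funext => x; rewrite /g; ring.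
rewrite (wls_split f hp); set q := pc _.
have gq : good Om q by rewrite /q; exact: (good_poly cO (pc_poly _)).
rewrite (_ : (fun x => f x - (p x + q x)) = fun x => g x + (-1) * q x); last first.
  by apply/funext => x; rewrite /g; ring.
rewrite /L2norm RintB_sq //.
set X := Rintegral mu Om (fun x : 'rV[R]_d => g x ^+ 2).
set Y := Rintegral mu Om (fun x : 'rV[R]_d => g x * q x).
set Z := Rintegral mu Om (fun x : 'rV[R]_d => q x ^+ 2).
have X0 : 0 <= X by apply: Rintegral_ge0 => x _; exact: sqr_ge0.
have Z0 : 0 <= Z by apply: Rintegral_ge0 => x _; exact: sqr_ge0.
have cs : Y ^+ 2 <= X * Z.
  apply: quad_disc => // t.
  rewrite -RintB_sq //; apply: Rintegral_ge0 => x _; exact: sqr_ge0.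
apply: le_trans (sqrt_tri X0 Z0 cs) _.
apply: lerD.
  apply: sqrt_bnd => //; first exact: fine_ge0 (measure_ge0 mu Om).
  exact: int_bnd.
apply: sqrt_bnd => //.
  by apply: divr_ge0; [apply: sumr_ge0 => i _; exact: ltW|exact: ltW].
rewrite /Z /q int_pc2.
set c := (_ ^T).
have h1 := hr c.
have h2 : qf G c <= (\sum_i w i) * E ^+ 2.
  rewrite /c -cub_pc2; apply: le_trans (cub_proj _) _; exact: cub_bnd.
by rewrite mulrAC ler_pdivlMr // mulrC; exact: le_trans h1 h2.
Qed.

Lemma m_gt0 : 0 < m.
Proof. by apply: fine_gt0; rewrite mpos mfin. Qed.

Lemma Om_ne : exists x, Om x.
Proof.
case: (pselect (exists x, Om x)) => // h.
have e : Om = set0 by apply/seteqP; split => x // Ox; apply: h; exists x.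
by move: mpos; rewrite e measure0 ltxx.
Qed.

Lemma sumw_le : \sum_i w i <= rmax G * m.
Proof.
have [c hc] := span (@polys1 R d n).
pose ev := \row_j c j.
have pe : pc ev = fun=> 1.
  by rewrite hc /pc; apply/funext => y; apply: eq_bigr => j _; rewrite mxE.
have e1 : \sum_i w i = qf G ev.
  by rewrite -cub_pc2 pe /cubature; apply: eq_bigr => i _; rewrite expr1n mulr1.
have e2 : nrm ev = m.
  rewrite -int_pc2 pe (_ : (fun _ => 1 ^+ 2) = fun=> 1); last first.
    by apply/funext => x; rewrite expr1n.
  by rewrite Rintegral_cst // mul1r.
by rewrite e1 -e2; exact: rmax_ge hB' ev.
Qed.

Lemma good_sub f p : good Om f -> polys n p -> good Om (fun x => f x - p x).
Proof.
move=> gf hp.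
have hm : good Om (fun x => (-1) * p x).
  by apply: good_mul; [exact: (good_cst Om (-1))|exact: (good_poly cO hp)].
have := good_add gf hm; congr good; apply/funext => x; ring.
Qed.

Lemma sup_props f p : good Om f -> polys n p ->
  0 <= sup [set `|f x - p x| | x in Om] /\ (forall x, Om x -> `|f x - p x| <= sup [set `|f x - p x| | x in Om]).
Proof.
move=> gf hp; have [_ [Mb hM]] := good_sub gf hp.
have ub : has_ubound [set `|f x - p x| | x in Om].
  by exists Mb => _ [x Ox <-]; exact: hM.
have hE : forall x, Om x -> `|f x - p x| <= sup [set `|f x - p x| | x in Om].
  by move=> x Ox; apply: ub_le_sup => //; exists x.
split => //; have [x0 Ox0] := Om_ne.
exact: le_trans (normr_ge0 _) (hE _ Ox0).
Qed.

Let sG := G_sym.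
Let k0 := k_gt0.

Lemma rmin_pos : 0 < rmin G.
Proof. exact: lt_le_trans A0 (A_le_rmin k0 hA'). Qed.

Lemma bound1 f p : good Om f -> polys n p ->
  L2norm mu Om (fun x => f x - wls w xs phi f x) <=
  (1 + Num.sqrt (cond2 G)) * Num.sqrt m * sup [set `|f x - p x| | x in Om].
Proof.
move=> gf hp; have [E0 hE] := sup_props gf hp.
apply: le_trans (err_gen gf hp E0 hE rmin_pos (rmin_le hA')) _.
set E := sup _.
have rp := rmin_pos.
have [_ rmM] := eig_bnd hA' hB' (eig_min k0 sG hA').
have rM : 0 < rmax G by apply: lt_le_trans rp rmM.
have -> : cond2 G = rmax G / rmin G by rewrite /cond2 (lmin_eq k0 sG hA' hB') (lmax_eq k0 sG hA' hB').
have sm := sqrtr_ge0 m.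
have hs : Num.sqrt ((\sum_i w i) / rmin G) <= Num.sqrt (rmax G / rmin G) * Num.sqrt m.
  rewrite -sqrtrM; last by apply: divr_ge0; apply: ltW.
  rewrite ler_sqrt; last by apply: mulr_ge0; [apply: divr_ge0; apply: ltW|exact: ltW m_gt0].
  rewrite mulrAC; apply: ler_wpM2r; first by rewrite invr_ge0 ltW.
  exact: sumw_le.
have h := ler_wpM2r E0 hs.
move: h; set s := Num.sqrt (_ / rmin G); set c := Num.sqrt (_ / _) => h.
rewrite -/E in h; lra.
Qed.

Lemma bound2 f p : good Om f -> polys n p -> \sum_i w i = m ->
  L2norm mu Om (fun x => f x - wls w xs phi f x) <=
  (1 + (Num.sqrt A)^-1) * Num.sqrt m * sup [set `|f x - p x| | x in Om].
Proof.
move=> gf hp sw; have [E0 hE] := sup_props gf hp.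
apply: le_trans (err_gen gf hp E0 hE A0 hA') _.
rewrite sw sqrtrM; last exact: ltW m_gt0.
rewrite sqrtrV; last exact: ltW.
by rewrite mulrDl mul1r mulrDl [_^-1 * _]mulrC.
Qed.


Lemma inf_step (err C : R) f : good Om f -> 0 < C ->
  (forall p, polys n p -> err <= C * sup [set `|f x - p x| | x in Om]) ->
  err <= C * best_approx_err n Om f.
Proof.
move=> gf C0 h; rewrite /best_approx_err -ler_pdivrMl //; apply: lb_le_inf.
  by exists (sup [set `|f x - 0 | | x in Om]); exists (fun=> 0) => //; exact: polys0.
by move=> _ [p hp <-]; rewrite ler_pdivrMl //; exact: h.
Qed.

Lemma En_ge0 f : good Om f -> 0 <= best_approx_err n Om f.
Proof.
move=> gf; apply: lb_le_inf.
  by exists (sup [set `|f x - 0 | | x in Om]); exists (fun=> 0) => //; exact: polys0.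
by move=> _ [p hp <-]; have [] := sup_props gf hp.
Qed.

Lemma main_result : Num.max `|A - 1| `|B - 1| < 1 ->
  let eta := Num.max `|A - 1| `|B - 1| in
  let G := gram w xs phi in
  forall f : 'rV_d -> R, {within Om, continuous f} ->
  let err := L2norm mu Om (fun x => f x - wls w xs phi f x) in
  let En := best_approx_err n Om f in
  let m := fine (mu Om) in
  (err <= (1 + Num.sqrt (cond2 G)) * Num.sqrt m * En /\
   (1 + Num.sqrt (cond2 G)) * Num.sqrt m * En
     <= (1 + Num.sqrt ((1 + eta) / (1 - eta))) * Num.sqrt m * En) /\
  (\sum_(i < M) w i = m ->
     err <= (1 + (Num.sqrt A)^-1) * Num.sqrt m * En /\
     (1 + (Num.sqrt A)^-1) * Num.sqrt m * En
       <= (1 + (Num.sqrt (1 - eta))^-1) * Num.sqrt m * En).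
Proof.
move=> heta eta G' f cf err En m'.
rewrite -/eta in heta.
have gf : good Om f := good_within cO cf.
have En0 : 0 <= En := En_ge0 gf.
have sm0 : 0 < Num.sqrt m' by rewrite sqrtr_gt0; exact: m_gt0.
have hA1 : `|A - 1| <= eta by rewrite /eta le_max lexx.
have hB1 : `|B - 1| <= eta by rewrite /eta le_max lexx orbT.
move: hA1 hB1; rewrite !ler_norml => /andP[a1 a2] /andP[b1 b2].
have Ale := A_le_rmin k0 hA'.
have Bge := rmax_le_B k0 hB'.
have rp := rmin_pos.
have cE : cond2 G' = rmax G / rmin G by rewrite /cond2 (lmin_eq k0 sG hA' hB') (lmax_eq k0 sG hA' hB').
split; [split|move=> sw; split].
- apply: inf_step => //; last by move=> p hp; exact: bound1.
  by apply: mulr_gt0 => //; apply: lt_le_trans (ltr01) _; rewrite lerDl sqrtr_ge0.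
- apply: ler_wpM2r => //; apply: ler_wpM2r; first exact: ltW.
  rewrite lerD2l ler_sqrt; last by apply: divr_ge0; lra.
  have -> : cond2 G' = rmax G / rmin G by exact: cE.
  rewrite ler_pdivrMr // mulrAC ler_pdivlMr; last by lra.
  have := lt_le_trans A0 Ale; nra.
- apply: inf_step => //; last by move=> p hp; exact: bound2.
  apply: mulr_gt0 => //; apply: lt_le_trans (ltr01) _; rewrite lerDl invr_ge0 sqrtr_ge0 //.
- apply: ler_wpM2r => //; apply: ler_wpM2r; first exact: ltW.
  rewrite lerD2l lef_pV2 ?posrE ?sqrtr_gt0 //; last by lra.
  by rewrite ler_sqrt; lra.
Qed.
End Main.

Theorem proposition1 (R : realType) (d : nat) (Om : set 'rV[R]_d)
  (mu : {measure set (Rd R d) -> \bar R}) (n M k : nat)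
  (w : 'I_M -> R) (xs : 'I_M -> 'rV[R]_d) (phi : 'I_k -> 'rV[R]_d -> R) (A B : R) :
  compact Om ->
  (0 < mu Om)%E -> (mu Om < +oo)%E ->
  (forall i, Om (xs i)) -> (forall i, 0 < w i) ->
  (forall j, @polys R d n (phi j)) ->
  (forall i j, Rintegral mu Om (fun x => phi i x * phi j x) = (i == j)%:R) ->
  (forall p, @polys R d n p -> exists c : 'I_k -> R, p = fun x => \sum_(j < k) c j * phi j x) ->
  0 < A -> 0 < B ->
  (forall p, @polys R d n p ->
     A * L2norm mu Om p ^+ 2 <= cubature w xs (fun x => p x ^+ 2) /\
     cubature w xs (fun x => p x ^+ 2) <= B * L2norm mu Om p ^+ 2) ->
  Num.max `|A - 1| `|B - 1| < 1 ->
  let eta := Num.max `|A - 1| `|B - 1| in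
  let G := gram w xs phi in
  forall f : 'rV[R]_d -> R, {within Om, continuous f} ->
  let err := L2norm mu Om (fun x => f x - wls w xs phi f x) in
  let En := best_approx_err n Om f in
  let m := fine (mu Om) in
  (err <= (1 + Num.sqrt (cond2 G)) * Num.sqrt m * En /\
   (1 + Num.sqrt (cond2 G)) * Num.sqrt m * En
     <= (1 + Num.sqrt ((1 + eta) / (1 - eta))) * Num.sqrt m * En) /\
  (\sum_(i < M) w i = m ->
     err <= (1 + (Num.sqrt A)^-1) * Num.sqrt m * En /\
     (1 + (Num.sqrt A)^-1) * Num.sqrt m * En
       <= (1 + (Num.sqrt (1 - eta))^-1) * Num.sqrt m * En).
Proof.
move=> cO mpos mfin xsO wpos phiP orth span A0 B0 hAB heta.
exact: (main_result cO mpos mfin xsO wpos phiP orth span A0 hAB heta).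
Qed.


Print Assumptions proposition1.
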